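(* Let $G$ be a tree on $k\ge 2$ vertices and $n\ge 1$. If $G$ has a perfect matching, then the number of perfect matchings of $\Gamma^G_n$ (with loops ignored and parallel edges counted as distinct edges) is $$2^{\frac{k}{2(k-1)}\left(k^n-2k^{n-1}+1\right)} ;$$ if $G$ has no perfect matching, then $\Gamma^G_n$ has no perfect matching.
   Context: Let $G=(V,E)$ be a finite tree with vertex set $V$ of size $k$, and fix an orientation of each edge, so that each edge becomes an ordered pair $e=(s,t)$. Each oriented edge $e=(s,t)$ acts on the set $V^*$ of finite words over the alphabet $V$ by the recursive rule: $e(\emptyset)=\emptyset$, $e(sw)=t\,e(w)$, $e(tw)=sw$, and $e(xw)=xw$ for $x\in V\setminus\{s,t\}$ (words are read left to right, $w\in V^*$). This action preserves word length. For $n\ge 1$, the Schreier graph $\Gamma_n^G$ is the multigraph with vertex set $V^n$ having, for each $u\in V^n$ and each oriented edge $e$ of $G$, one edge joining $u$ and $e(u)$, labelled $e$ (a loop if $e(u)=u$). A perfect matching of a graph is a set $M$ of non-loop edges such that every vertex is incident to exactly one edge of $M$. *)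

(* Defs.v *)
From mathcomp Require Import all_boot.
Set Implicit Arguments. Unset Strict Implicit. Unset Printing Implicit Defensive.

(* A tree G = (V,E) with a fixed orientation of each edge is given by a finite
   vertex type V and a list E of oriented edges (s,t). *)
Section Defs.
Variable V : finType.
Variable E : seq (V * V).

Definition edge (i : 'I_(size E)) : V * V := tnth (in_tuple E) i.

Definition adj : rel V := fun x y => ((x, y) \in E) || ((y, x) \in E).

Definition is_tree : Prop :=
  [/\ uniq E,
      forall x y, (x, y) \in E -> x != y,
      forall x y, (x, y) \in E -> (y, x) \notin E,
      forall x y, connect adj x y
    & size E = #|V|.-1].

Definition tree_has_pm : Prop :=
  exists M : {set 'I_(size E)},
    forall v : V, #|[set i in M | (v == (edge i).1) || (v == (edge i).2)]| = 1.

Fixpoint act (s t : V) (w : seq V) : seq V :=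
  match w with
  | [::] => [::]
  | x :: w' => if x == s then t :: act s t w'
               else if x == t then s :: w' else x :: w'
  end.

(* Schreier graph Gamma_n: vertices V^n (n-tuples), and for each u in V^n and
   each oriented edge e (index i) one edge (u,i) joining u and e(u). *)
Definition sedge (n : nat) := (n.-tuple V * 'I_(size E))%type.

Definition sincident (n : nat) (v : n.-tuple V) (x : sedge n) : bool :=
  (v == x.1) || (val v == act (edge x.2).1 (edge x.2).2 (val x.1)).

Definition sloop (n : nat) (x : sedge n) : bool :=
  act (edge x.2).1 (edge x.2).2 (val x.1) == val x.1.

Definition schreier_pm (n : nat) (M : {set sedge n}) : bool :=
  [forall x, (x \in M) ==> ~~ sloop x] &&
  [forall v : n.-tuple V, #|[set x in M | sincident v x]| == 1].

End Defs.

(* Main.v *)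
Require Import Defs.
From mathcomp Require Import all_boot zify.
Set Implicit Arguments. Unset Strict Implicit. Unset Printing Implicit Defensive.


Section SeqAct.
Variable V : eqType.
Variables s t : V.
Hypothesis st : s != t.

Fixpoint actS (w : seq V) : seq V :=
  match w with
  | [::] => [::]
  | x :: w' => if x == s then t :: actS w'
               else if x == t then s :: w' else x :: w'
  end.

Fixpoint actinv (w : seq V) : seq V :=
  match w with
  | [::] => [::]
  | x :: w' => if x == s then t :: w'
               else if x == t then s :: actinv w' else x :: w'
  end.

Fixpoint rho (w : seq V) : seq V :=
  match w with
  | [::] => [::]
  | x :: w' => if (x == s) || (x == t) then s :: rho w' else x :: w'
  end.

Lemma size_actS w : size (actS w) = size w.
Proof. elim: w => //= x w IH; case: ifP => //= _; [by rewrite IH|by case: ifP]. Qed.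

Lemma size_actinv w : size (actinv w) = size w.
Proof. elim: w => //= x w IH; case: ifP => //= _; case: ifP => //= _; by rewrite IH. Qed.

Lemma size_rho w : size (rho w) = size w.
Proof. elim: w => //= x w IH; case: ifP => //= _; by rewrite IH. Qed.

Lemma ts : (t == s) = false.
Proof. by rewrite eq_sym; apply/negbTE. Qed.

Lemma actS_inv w : actS (actinv w) = w.
Proof.
elim: w => //= x w IH; case: (eqVneq x s) => [xs|xs]; first (subst x => /=).
  by rewrite ts eqxx.
case: (eqVneq x t) => [xt|xt]; first (subst x => /=); first by rewrite eqxx IH.
by rewrite /= ?(negbTE xs) ?(negbTE xt).
Qed.

Lemma actinvS w : actinv (actS w) = w.
Proof.
elim: w => //= x w IH; case: (eqVneq x s) => [xs|xs]; first (subst x => /=).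
  by rewrite ts eqxx IH.
case: (eqVneq x t) => [xt|xt]; first (subst x => /=); first by rewrite eqxx.
by rewrite /= ?(negbTE xs) ?(negbTE xt).
Qed.

Lemma rho_act w : rho (actS w) = rho w.
Proof.
elim: w => //= x w IH; case: (eqVneq x s) => [xs|xs]; first (subst x => /=).
  by rewrite eqxx orbT IH.
case: (eqVneq x t) => [xt|xt]; first (subst x => /=); first by rewrite !eqxx.
by rewrite /= ?(negbTE xs) ?(negbTE xt).
Qed.

Lemma rho_actinv w : rho (actinv w) = rho w.
Proof. by rewrite -{2}(actS_inv w) rho_act. Qed.

Lemma rho_idem w : rho (rho w) = rho w.
Proof.
elim: w => //= x w IH; case: ifP => /= H; first by rewrite eqxx IH.
by rewrite H.
Qed.

Lemma iter_act2 j u : iter (j.*2) actS (s :: u) = s :: iter j actS u.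
Proof.
elim: j => //= j IH; rewrite IH /= eqxx /= ts eqxx //.
Qed.

Lemma rho_iter w : exists j, rho w = iter j actS w.
Proof.
elim: w => [|x w [j IH]] /=; first by exists 0.
case: (eqVneq x s) => [xs|xs]; first (subst x => /=); first by exists j.*2; rewrite iter_act2 IH.
case: (eqVneq x t) => [xt|xt]; first (subst x => /=).
  by exists (j.*2).+1; rewrite iterSr /= ts eqxx iter_act2 IH.
by exists 0.
Qed.

End SeqAct.

Lemma actE (V : finType) (s t : V) w : act s t w = actS s t w.
Proof. by elim: w => //= x w ->. Qed.


Definition inc (V : finType) (E : seq (V * V)) (v : V) (j : 'I_(size E)) :=
  (v == (edge j).1) || (v == (edge j).2).

Lemma adj_edge (V : finType) (E : seq (V * V)) x y :
  adj E x y -> exists i : 'I_(size E), (edge i == (x,y)) || (edge i == (y,x)).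
Proof.
have H : forall p, p \in E -> exists i : 'I_(size E), edge i = p.
  move=> p pE; have ip : index p E < size E by rewrite index_mem.
  by exists (Ordinal ip); rewrite /edge (tnth_nth p) /= nth_index.
case/orP => /H [i Hi]; exists i; by rewrite Hi eqxx ?orbT.
Qed.

Section Tree.
Variables (V : finType) (E : seq (V * V)).
Hypothesis Hconn : forall x y, connect (adj E) x y.
Hypothesis Hsize : size E = #|V|.-1.
Variable r : V.
Variable i0 : 'I_(size E).

Fixpoint reach k : {set V} :=
  if k is k'.+1 then reach k' :|: [set y | [exists x in reach k', adj E x y]]
  else [set r].

Lemma reach_mono k k' : k <= k' -> reach k \subset reach k'.
Proof.
move=> /subnKC <-; elim: (k' - k) => [|d IH]; first by rewrite addn0.
apply: (subset_trans IH); rewrite addnS /=; exact: subsetUl.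
Qed.

Lemma reach_path p x k : x \in reach k -> path (adj E) x p ->
  last x p \in reach (k + size p).
Proof.
elim: p x k => [|y p IH] x k /=; first by rewrite addn0.
move=> xk /andP [axy pp]; rewrite addnS -addSn; apply: IH pp.
by rewrite /= in_setU in_set; apply/orP; right; apply/existsP; exists x; rewrite xk.
Qed.

Lemma reach_ex v : exists k, v \in reach k.
Proof.
have /connectP [p pth ->] := Hconn r v.
by exists (0 + size p); apply: reach_path => //; rewrite /= in_set1.
Qed.

Definition dist v := ex_minn (reach_ex v).

Lemma dist_reach v : v \in reach (dist v).
Proof. by rewrite /dist; case: ex_minnP. Qed.

Lemma dist_min v k : v \in reach k -> dist v <= k.
Proof. by rewrite /dist; case: ex_minnP => d _ H /H. Qed.

Lemma dist_adj x y : adj E x y -> dist y <= (dist x).+1.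
Proof.
move=> axy; apply: dist_min; rewrite /= in_setU in_set; apply/orP; right.
by apply/existsP; exists x; rewrite dist_reach.
Qed.

Lemma dist_par v : v != r -> exists u, adj E u v && ((dist u).+1 == dist v).
Proof.
move=> vr; have := dist_reach v; case E1: (dist v) => [|d].
  by rewrite /= in_set1 (negbTE vr).
rewrite /= in_setU in_set => /orP [H|].
  by have := dist_min H; rewrite E1 ltnn.
case/existsP => u /andP [ud auv]; exists u; rewrite auv /=.
have h1 := dist_min ud.
have := dist_adj auv; rewrite E1 ltnS => h2.
by rewrite eqSS eqn_leq h1 h2.
Qed.

Definition par v := odflt r [pick u | adj E u v && ((dist u).+1 == dist v)].

Lemma parP v : v != r -> adj E (par v) v /\ (dist (par v)).+1 = dist v.
Proof.
move=> vr; rewrite /par; case: pickP => [u /andP [a /eqP d]|H] //=.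
by have [u /andP [a d]] := dist_par vr; have := H u; rewrite a d.
Qed.

Definition pe v := odflt i0 [pick i | (edge i == (par v, v)) || (edge i == (v, par v))].

Lemma peP v : v != r -> (edge (pe v) == (par v, v)) || (edge (pe v) == (v, par v)).
Proof.
move=> vr; rewrite /pe; case: pickP => [i H|H] //=.
have [a _] := parP vr; have [i Hi] := adj_edge a.
by have := H i; rewrite Hi.
Qed.

Lemma pe_inj : {in [pred v | v != r] &, injective pe}.
Proof.
move=> v v' vr v'r e; have [_ dv] := parP vr; have [_ dv'] := parP v'r.
have := peP vr; have := peP v'r; rewrite e.
case/orP => /eqP -> /orP [] /eqP [] h1 h2.
- by rewrite h2.
- by rewrite h1 in dv'; rewrite -h2 in dv; lia.
- by rewrite h2 in dv'; rewrite -h1 in dv; lia.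
- by rewrite h1.
Qed.

Lemma pe_surj i : exists2 v, v != r & pe v = i.
Proof.
have : [set pe v | v in [pred v | v != r]] = [set: 'I_(size E)].
  apply/eqP; rewrite eqEcard subsetT /= card_in_imset; last exact: pe_inj.
  rewrite cardsT card_ord Hsize.
  by rewrite -(cardC1 r); apply: eq_leq; apply: eq_card.
move/setP/(_ i); rewrite in_setT => /imsetP [v vr ->]; by exists v.
Qed.

Lemma tree_leaf (D : {set 'I_(size E)}) : D != set0 ->
  exists v i, [/\ i \in D, inc v i & forall j, j \in D -> inc v j -> j = i].
Proof.
case/set0Pn => i1 i1D; have [v1 v1r pv1] := pe_surj i1.
pose C := [pred v | (v != r) && (pe v \in D)].
have Cv1 : C v1 by rewrite /C /= v1r pv1.
case: (arg_maxnP dist Cv1) => v /andP [vr vD] vmax.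
exists v, (pe v); split => //.
  by rewrite /inc; case/orP: (peP vr) => /eqP -> /=; rewrite eqxx ?orbT.
move=> j jD incj; have [v' v'r pv'] := pe_surj j.
have Cv' : C v' by rewrite /C /= v'r pv'.
have := vmax v' Cv'; have [_ dv'] := parP v'r.
move: incj; rewrite /inc -pv'.
case/orP: (peP v'r) => /eqP -> /= /orP [] /eqP E2; subst => //.
- by rewrite -dv' ltnn.
- by rewrite -dv' ltnn.
Qed.

End Tree.


Section Weights.
Variables (V : finType) (E : seq (V * V)).
Hypothesis Hconn : forall x y, connect (adj E) x y.
Hypothesis Hsize : size E = #|V|.-1.
Variable r : V.
Variable i0 : 'I_(size E).

Lemma weight_01 (w : 'I_(size E) -> nat) N : 0 < N ->
  (forall v, \sum_(j | inc v j) w j = N) -> forall j, (w j == 0) || (w j == N).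
Proof.
move=> N0 Hs.
have le : forall j, w j <= N.
  move=> j; rewrite -(Hs (edge j).1) (bigD1 j) /=; last by rewrite /inc eqxx.
  exact: leq_addr.
pose D := [set j | 0 < w j < N].
case: (eqVneq D set0) => [D0|DN0].
  move=> j; have : j \notin D by rewrite D0 in_set0.
  by rewrite in_set; have := le j; lia.
exfalso; have [v [i [iD vi Hu]]] := tree_leaf Hconn Hsize r i0 DN0.
have := Hs v; rewrite (bigD1 i) //=.
have rest : forall j, inc v j && (j != i) -> (w j == 0) || (w j == N).
  move=> j /andP [vj ji]; have : j \notin D.
    by apply/negP => jD; move: ji; rewrite (Hu j jD vj) eqxx.
  by rewrite in_set; have := le j; lia.
move: iD; rewrite in_set => /andP [wi0 wiN].
case: (boolP [exists j, (inc v j && (j != i)) && (w j == N)]).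
  case/existsP => j /andP [jc /eqP wj].
  rewrite (bigD1 j) //= wj; lia.
rewrite negb_exists => /forallP H0.
rewrite big1; first by lia.
move=> j jc; have := rest j jc; have := H0 j; rewrite jc /=; lia.
Qed.

Lemma cover_uniq (M : {set 'I_(size E)}) v :
  #|[set i in M | inc v i]| = 1 -> forall i i', i \in M -> inc v i ->
  i' \in M -> inc v i' -> i = i'.
Proof.
move/eqP/cards1P => [j Hj] i i' iM vi i'M vi'.
have : i \in [set i in M | inc v i] by rewrite in_set iM vi.
have : i' \in [set i in M | inc v i] by rewrite in_set i'M vi'.
by rewrite Hj !in_set1 => /eqP -> /eqP ->.
Qed.



Lemma cover_ex (M : {set 'I_(size E)}) v :
  #|[set i in M | inc v i]| = 1 -> exists i, (i \in M) && inc v i.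
Proof.
move/eqP/cards1P => [j Hj]; exists j.
have : j \in [set i in M | inc v i] by rewrite Hj in_set1.
by rewrite in_set.
Qed.

Lemma pm_unique (M1 M2 : {set 'I_(size E)}) :
  (forall v, #|[set i in M1 | inc v i]| = 1) ->
  (forall v, #|[set i in M2 | inc v i]| = 1) -> M1 = M2.
Proof.
move=> H1 H2.
pose D := (M1 :\: M2) :|: (M2 :\: M1).
have key : forall (A B : {set 'I_(size E)}),
    (forall v, #|[set i in A | inc v i]| = 1) ->
    (forall v, #|[set i in B | inc v i]| = 1) ->
    forall v i, i \in A -> i \notin B -> inc v i ->
    (forall j, inc v j -> j != i -> (j \in A) = (j \in B)) -> False.
  move=> A B HA HB v i iA iB vi Hj.
  have [j /andP [jB vj]] := cover_ex (HB v).
  have ji : j != i by apply/negP => /eqP E1; move: iB; rewrite -E1 jB.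
  have jA : j \in A by rewrite Hj.
  by move: ji; rewrite (cover_uniq (HA v) jA vj iA vi) eqxx.
case: (eqVneq D set0) => [D0|DN0].
  apply/setP => x; have : x \notin D by rewrite D0 in_set0.
  rewrite !in_set; by case: (x \in M1); case: (x \in M2).
exfalso; have [v [i [iD vi Hu]]] := tree_leaf Hconn Hsize r i0 DN0.
have Hj : forall j, inc v j -> j != i -> (j \in M1) = (j \in M2).
  move=> j vj ji; case: (boolP (j \in D)) => jD.
    by move: ji; rewrite (Hu j jD vj) eqxx.
  by move: jD; rewrite !in_set; case: (j \in M1); case: (j \in M2).
move: iD; rewrite !in_set => /orP [] /andP [iB iA].
  exact: (key M1 M2 H1 H2 v i iA iB vi Hj).
apply: (key M2 M1 H2 H1 v i iA iB vi) => j vj ji; by rewrite Hj.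
Qed.

End Weights.


Lemma sum_pred1 (T : finType) (H : pred T) (a : T) :
  \sum_(v | H v) (v == a : nat) = H a.
Proof.
rewrite big_mkcond (bigD1 a) //= eqxx big1 ?addn0; first by case: (H a).
by move=> v /negbTE ->; case: (H v).
Qed.

Lemma sum_or2 (T : finType) (H : pred T) (a b : T) : a != b ->
  \sum_(v | H v) ((v == a) || (v == b) : nat) = H a + H b.
Proof.
move=> ab; rewrite -!sum_pred1 -big_split /=; apply: eq_bigr => v _.
case: (eqVneq v a) => [->|//]; by rewrite (negbTE ab).
Qed.

Lemma card_sum (T : finType) (A : {set T}) (Q : pred T) :
  #|[set y in A | Q y]| = \sum_(y in A) (Q y : nat).
Proof.
rewrite -sum1_card (eq_bigl (fun y => (y \in A) && Q y)); last by move=> y; rewrite in_set.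
rewrite big_mkcondr; apply: eq_bigr => y _; by case: (Q y).
Qed.

Section Schreier.
Variables (V : finType) (E : seq (V * V)) (m : nat).
Hypothesis Hconn : forall x y, connect (adj E) x y.
Hypothesis Hsize : size E = #|V|.-1.
Hypothesis Hneq : forall x y, (x, y) \in E -> x != y.
Variables (r : V) (i0 : 'I_(size E)).

Local Notation n := m.+1.
Local Notation tup := (n.-tuple V).

Lemma edge_neq (i : 'I_(size E)) : (edge i).1 != (edge i).2.
Proof.
have : edge i \in E := mem_tnth i (in_tuple E).
by move: (edge i) => [x y] /Hneq.
Qed.

Lemma val_eta (u : tup) : val u = thead u :: behead u.
Proof. by rewrite {1}(tuple_eta u). Qed.

Lemma head_of (u : tup) x l : val u = x :: l -> thead u = x /\ behead u = l.
Proof. by rewrite val_eta => [[-> ->]]. Qed.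

Definition mk (l : seq V) : tup := insubd (nseq_tuple n r) l.

Lemma mkK l : size l = n -> val (mk l) = l.
Proof. by move=> H; rewrite /mk insubdK //= -topredE /= H. Qed.

Lemma size_act s t (l : seq V) : size (act s t l) = size l.
Proof. by rewrite actE size_actS. Qed.

Definition mP (P : {set sedge E n}) j := #|[set y in P | y.2 == j]|.

Lemma per_edge (y : sedge E n) x : ~~ sloop y ->
  \sum_(v : tup | thead v == x) (sincident v y : nat) = inc x y.2.
Proof.
case: y => u j; rewrite /sloop /sincident /= => nl.
set s := (edge j).1; set t := (edge j).2.
have st : s != t := edge_neq j.
set a := act s t (val u).
have Hu' : val (mk a) = a by rewrite mkK // size_act size_tuple.
have uu : u != mk a by apply/negP => /eqP E1; move: nl; rewrite -/s -/t -/a -Hu' -E1 eqxx.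
rewrite (eq_bigr (fun v => ((v == u) || (v == mk a) : nat))); last first.
  move=> v _; congr (_ || _); apply/eqP/eqP => [H|->]; last exact: Hu'.
  by apply: val_inj => /=; rewrite Hu'; exact: H.
rewrite sum_or2 //.
have Ha : a = actS s t (thead u :: behead u) by rewrite /a actE -val_eta.
have fin : forall z1 z2, z1 != z2 -> (z1 == s) || (z1 == t) -> (z2 == s) || (z2 == t) ->
   (z1 == x) + (z2 == x) = inc x j.
  move=> z1 z2 z12 h1 h2; rewrite /inc -/s -/t.
  have key : (s == x) + (t == x) = (x == s) || (x == t).
    rewrite ![_ == x]eq_sym; case: (eqVneq x s) => [->|xs] /=.
      by rewrite ?eqxx (negbTE st).
    by case: (x == t).
  case/orP: h1 => /eqP ?; case/orP: h2 => /eqP ?; subst; rewrite ?eqxx // in z12.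
  by rewrite addnC.
case: (eqVneq (thead u) s) => zs.
  have : val (mk a) = t :: actS s t (behead u) by rewrite Hu' Ha /= zs eqxx.
  move/head_of => [-> _]; apply: fin; by rewrite ?zs ?eqxx ?orbT // eq_sym st.
case: (eqVneq (thead u) t) => zt.
  have : val (mk a) = s :: behead u by rewrite Hu' Ha /= (negbTE zs) zt eqxx.
  move/head_of => [-> _]; apply: fin => //; by rewrite ?zt ?eqxx ?orbT.
by move: nl; rewrite -/s -/t -/a Ha /= (negbTE zs) (negbTE zt) -val_eta eqxx.
Qed.


Lemma card_pred (T : finType) (Q : pred T) : #|[set y | Q y]| = \sum_y (Q y : nat).
Proof.
rewrite -sum1_card big_mkcond; apply: eq_bigr => y _; rewrite in_set; by case: (Q y).
Qed.

Lemma card_cons x (q : seq V -> bool) :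
  #|[set v : tup | (thead v == x) && q (behead v)]| = #|[set w : m.-tuple V | q (val w)]|.
Proof.
have -> : [set v : tup | (thead v == x) && q (behead v)] =
          [set cons_tuple x w | w in [set w : m.-tuple V | q (val w)]].
  apply/setP => v; rewrite in_set; apply/andP/imsetP.
    move=> [/eqP hx hq]; exists (behead_tuple v); first by rewrite in_set.
    by apply: val_inj; rewrite /= val_eta hx.
  by move=> [w wA ->]; rewrite in_set in wA; split => //; rewrite theadE.
apply: card_imset => w w' H.
by apply: val_inj; have := congr1 (fun z : tup => behead (val z)) H.
Qed.

Lemma card_head x : #|[set v : tup | thead v == x]| = #|V| ^ m.
Proof.
rewrite (_ : [set v : tup | thead v == x] = [set v : tup | (thead v == x) && predT (behead v)]).
  by rewrite card_cons -card_tuple; apply: eq_card => w; rewrite in_set.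
by apply/setP => v; rewrite !in_set andbT.
Qed.

Lemma card_split (p : seq V -> bool) :
  #|[set v : tup | p (val v)]| = \sum_x #|[set w : m.-tuple V | p (x :: val w)]|.
Proof.
rewrite card_pred (partition_big (fun v : tup => thead v) predT) //=.
apply: eq_bigr => x _; rewrite -(card_cons x (fun l => p (x :: l))) card_pred.
rewrite big_mkcond /=; apply: eq_bigr => v _.
by case: (eqVneq (thead v) x) => [<-|] //=; rewrite -val_eta.
Qed.

Lemma dc (P : {set sedge E n}) x : schreier_pm P ->
  \sum_(j | inc x j) mP P j = #|V| ^ m.
Proof.
move/andP => [/forallP NL /forallP C].
rewrite -(card_head x) card_pred -big_mkcond /=.
rewrite (eq_bigr (fun v => \sum_(y in P) (sincident v y : nat))); last first.
  by move=> v _; rewrite -card_sum; have /eqP -> := C v.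
rewrite exchange_big /=.
rewrite (eq_bigr (fun y => \sum_(j | inc x j) (j == y.2 : nat))); last first.
  move=> y yP; rewrite sum_pred1 per_edge //; by have /implyP := NL y; apply.
rewrite exchange_big /=; apply: eq_bigr => j _.
rewrite /mP card_sum; apply: eq_bigr => y _; by rewrite eq_sym.
Qed.


Lemma N_gt0 : 0 < #|V| ^ m.
Proof. have H : 0 < #|V| by apply/card_gt0P; exists r. by rewrite expn_gt0 H. Qed.

Lemma spm_01 P : schreier_pm P -> forall j, (mP P j == 0) || (mP P j == #|V| ^ m).
Proof. move=> HP; apply: (weight_01 Hconn Hsize r i0 N_gt0) => v; exact: dc. Qed.

Lemma spm_tree P : schreier_pm P ->
  forall v, #|[set i in [set j | mP P j == #|V| ^ m] | inc v i]| = 1.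
Proof.
move=> HP v; have := dc v HP; set N := #|V| ^ m.
rewrite (eq_bigr (fun j => N * (j \in [set j | mP P j == N]))); last first.
  move=> j _; rewrite in_set; case/orP: (spm_01 HP j) => /eqP ->.
    by rewrite eq_sym (negbTE (lt0n_neq0 N_gt0)) muln0.
  by rewrite eqxx muln1.
rewrite -big_distrr /= card_sum.
rewrite (_ : \sum_(j | inc v j) _ = \sum_(y in [set j | mP P j == N]) (inc v y : nat)).
  move=> H; apply/eqP; by rewrite -(eqn_pmul2l N_gt0) H muln1.
rewrite big_mkcond [RHS]big_mkcond; apply: eq_bigr => j _.
by case: (inc v j); case: (j \in _).
Qed.

Lemma nonloop_inc (y : sedge E n) : ~~ sloop y -> inc (thead y.1) y.2.
Proof.
case: y => u j; rewrite /sloop /inc /= actE val_eta /=.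
case: (thead u == (edge j).1) => //=; case: (thead u == (edge j).2) => //=.
by rewrite eqxx.
Qed.

Section WithPM.
Variable M0 : {set 'I_(size E)}.
Hypothesis HM0 : forall v, #|[set i in M0 | inc v i]| = 1.

Definition lab x := odflt i0 [pick i in M0 | inc x i].

Lemma labP x : (lab x \in M0) && inc x (lab x).
Proof.
rewrite /lab; case: pickP => [i //|H] /=.
by have [i Hi] := cover_ex (HM0 x); have := H i; rewrite Hi.
Qed.

Lemma lab_uniq x j : j \in M0 -> inc x j -> j = lab x.
Proof.
move=> jM xj; case/andP: (labP x) => lM xl.
exact: (cover_uniq (HM0 x) jM xj lM xl).
Qed.

Definition sT x := (edge (lab x)).1.
Definition tT x := (edge (lab x)).2.

Lemma edge_lab1 x : (edge (lab x)).1 = sT x. Proof. by []. Qed.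
Lemma edge_lab2 x : (edge (lab x)).2 = tT x. Proof. by []. Qed.

Lemma st_neq x : sT x != tT x.
Proof. exact: edge_neq. Qed.

Lemma x_st x : (x == sT x) || (x == tT x).
Proof. by case/andP: (labP x). Qed.

Lemma lab_s x : lab (sT x) = lab x.
Proof. by case/andP: (labP x) => lM _; apply/esym/lab_uniq => //; rewrite /inc eqxx. Qed.

Lemma lab_t x : lab (tT x) = lab x.
Proof. by case/andP: (labP x) => lM _; apply/esym/lab_uniq => //; rewrite /inc eqxx orbT. Qed.

Lemma sT_s x : sT (sT x) = sT x. Proof. by rewrite /sT lab_s. Qed.
Lemma tT_s x : tT (sT x) = tT x. Proof. by rewrite /tT lab_s. Qed.
Lemma sT_t x : sT (tT x) = sT x. Proof. by rewrite /sT lab_t. Qed.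
Lemma tT_t x : tT (tT x) = tT x. Proof. by rewrite /tT lab_t. Qed.

Lemma spm_lab (P : {set sedge E n}) : schreier_pm P -> forall y, y \in P -> y.2 = lab (thead y.1).
Proof.
move=> HP y yP.
have Heq := pm_unique Hconn Hsize r i0 (spm_tree HP) HM0.
have pos : 0 < mP P y.2.
  by apply/card_gt0P; exists y; rewrite in_set yP eqxx.
have yM : y.2 \in M0.
  rewrite -Heq in_set; case/orP: (spm_01 HP y.2) => //.
  by move/eqP => E1; rewrite E1 in pos.
apply: lab_uniq => //; apply: nonloop_inc.
by case/andP: HP => /forallP /(_ y) /implyP /(_ yP).
Qed.




Lemma size_beh (v : tup) : size (behead v) = m.
Proof. by rewrite size_behead size_tuple. Qed.

Definition partner (v : tup) : tup :=
  let x := thead v in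
  mk (if x == sT x then tT x :: behead v
      else sT x :: actinv (sT x) (tT x) (behead v)).

Lemma val_partner v : val (partner v) =
  let x := thead v in
  if x == sT x then tT x :: behead v
  else sT x :: actinv (sT x) (tT x) (behead v).
Proof. by rewrite /partner mkK //; case: ifP => _ /=; rewrite ?size_actinv size_beh. Qed.

Lemma tT_neq x : (tT x == sT x) = false.
Proof. by rewrite eq_sym; apply/negbTE/st_neq. Qed.

Lemma sinc_partner v : sincident v (partner v, lab (thead v)).
Proof.
rewrite /sincident /= val_partner /= actE; apply/orP; right.
rewrite [in X in X == _]val_eta; case: ifP => /eqP H /=.
  by rewrite ?edge_lab1 ?edge_lab2 tT_neq eqxx -H.
rewrite ?edge_lab1 ?edge_lab2 eqxx actS_inv ?st_neq //.
case/orP: (x_st (thead v)) => [/eqP E1|ht]; first by case: (H E1).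
by rewrite -(eqP ht).
Qed.

Lemma v_neq_partner v : v != partner v.
Proof.
apply/negP => /eqP E1; have := val_eta v; rewrite {1}E1 val_partner /=.
case: ifP => /eqP H E3; have /= E2 := congr1 (head (thead v)) E3.
  by move: (st_neq (thead v)); rewrite E2 -H eqxx.
by apply: H; rewrite E2.
Qed.

Lemma cand (Q : {set sedge E n}) v :
  (forall y, y \in Q -> y.2 = lab (thead y.1)) ->
  #|[set y in Q | sincident v y]| =
    ((v, lab (thead v)) \in Q) + ((partner v, lab (thead v)) \in Q).
Proof.
move=> HQ.
have ne : (v, lab (thead v)) != (partner v, lab (thead v)).
  by apply/negP => /eqP [] /eqP; apply/negP/v_neq_partner.
rewrite -(sum_or2 (fun y => y \in Q) ne) -card_sum.
apply: eq_card => y; rewrite !in_set.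
case: (boolP (y \in Q)) => yQ //=; apply/idP/idP.
  have := HQ y yQ; case: y yQ => u j yQ /= ->.
  rewrite /sincident /= => /orP [/eqP <-|]; first by rewrite eqxx.
  rewrite ?edge_lab1 ?edge_lab2 actE [in X in _ == X -> _]val_eta /=.
  set z := thead u.
  case: (boolP (z == sT z)) => zs.
    move=> /eqP /head_of [hv bv]; apply/orP; right.
    apply/eqP; rewrite hv lab_t; congr pair; apply/val_inj.
    rewrite val_partner /= hv sT_t tT_t tT_neq bv actinvS ?st_neq //.
    by rewrite [LHS]val_eta -(eqP zs).
  have zt : z == tT z by case/orP: (x_st z) => // E1; rewrite E1 in zs.
  rewrite zt => /eqP /head_of [hv bv]; apply/orP; right.
  apply/eqP; rewrite hv lab_s; congr pair; apply/val_inj.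
  by rewrite val_partner /= hv sT_s eqxx tT_s bv [LHS]val_eta -(eqP zt).
case/orP => /eqP ->; first by rewrite /sincident /= eqxx.
exact: sinc_partner.
Qed.


Definition Ex (T : {set tup}) x (w : seq V) :=
  [exists q in T, val q == sT x :: rho (sT x) (tT x) w].
Definition inS (T : {set tup}) (u : tup) := (thead u == sT (thead u)) == Ex T (thead u) (behead u).
Definition Phi (T : {set tup}) : {set sedge E n} := [set y | (y.2 == lab (thead y.1)) && inS T y.1].
Definition R : {set tup} := [set u | (thead u == sT (thead u)) &&
   (rho (sT (thead u)) (tT (thead u)) (behead u) == behead u)].
Definition Tof (P : {set sedge E n}) := [set u in R | (u, lab (thead u)) \in P].

Lemma Phi_lab (T : {set tup}) y : y \in Phi T -> y.2 = lab (thead y.1).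
Proof. by rewrite in_set => /andP [/eqP]. Qed.

Lemma head_partner v : thead (partner v) =
  if thead v == sT (thead v) then tT (thead v) else sT (thead v).
Proof. by have := val_eta (partner v); rewrite val_partner /=; case: ifP => _ [->]. Qed.

Lemma behead_partner v : behead (partner v) =
  if thead v == sT (thead v) then behead v
  else actinv (sT (thead v)) (tT (thead v)) (behead v).
Proof. by rewrite /= val_partner /=; case: ifP. Qed.

Lemma lab_partner v : lab (thead (partner v)) = lab (thead v).
Proof. by rewrite head_partner; case: ifP => _; rewrite ?lab_t ?lab_s. Qed.

Lemma sT_partner v : sT (thead (partner v)) = sT (thead v).
Proof. by rewrite /sT lab_partner. Qed.
Lemma tT_partner v : tT (thead (partner v)) = tT (thead v).
Proof. by rewrite /tT lab_partner. Qed.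

Lemma Ex_t (T : {set tup}) x w : Ex T (tT x) w = Ex T x w.
Proof. by rewrite /Ex sT_t tT_t. Qed.
Lemma Ex_s (T : {set tup}) x w : Ex T (sT x) w = Ex T x w.
Proof. by rewrite /Ex sT_s tT_s. Qed.

Lemma inS_partner (T : {set tup}) v : inS T (partner v) = ~~ inS T v.
Proof.
rewrite /inS sT_partner head_partner behead_partner.
case: ifP => H.
  by rewrite Ex_t tT_neq; case: (Ex T _ _).
rewrite eqxx Ex_s /Ex rho_actinv ?st_neq //.
by case: [exists q in T, _].
Qed.

Lemma nonloop_lab (u : tup) : ~~ sloop (u, lab (thead u)).
Proof.
rewrite /sloop /= edge_lab1 edge_lab2 actE val_eta /=.
case: ifP => [/eqP zs|zs].
  by rewrite eqseq_cons {2}zs tT_neq.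
have zt : thead u == tT (thead u) by case/orP: (x_st (thead u)) => //; rewrite zs.
by rewrite zt eqseq_cons eq_sym zs.
Qed.

Lemma Phi_pm (T : {set tup}) : schreier_pm (Phi T).
Proof.
apply/andP; split.
  apply/forallP => y; apply/implyP => yP; have := Phi_lab yP.
  by case: y yP => u j /= _ ->; apply: nonloop_lab.
apply/forallP => v; rewrite cand; last exact: Phi_lab.
rewrite !in_set /= eqxx lab_partner eqxx /= inS_partner.
by case: (inS T v).
Qed.

Lemma Tof_Phi (T : {set tup}) : T \subset R -> Tof (Phi T) = T.
Proof.
move=> TR; apply/setP => u.
rewrite /Tof in_set [_ \in Phi T]in_set /= eqxx /=.
case: (boolP (u \in R)) => uR /=; last first.
  by apply/esym/negbTE; apply: contra uR; exact: (subsetP TR).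
move: (uR); rewrite in_set => /andP [xs /eqP rw].
rewrite /inS xs /= /Ex rw -(eqP xs); apply/existsP/idP.
  case=> q /andP [qT /eqP qv]; suff -> : u = q by [].
  by apply: val_inj; rewrite /= qv [LHS]val_eta.
by move=> uT; exists u; rewrite uT /= [X in X == _]val_eta.
Qed.

Section PMfix.
Variable P : {set sedge E n}.
Hypothesis HP : schreier_pm P.

Definition memb (u : tup) := (u, lab (thead u)) \in P.

Lemma pair_sum v : memb v + memb (partner v) = 1.
Proof.
have := cand v (spm_lab HP).
case/andP: HP => _ /forallP /(_ v) /eqP -> E1; by rewrite /memb lab_partner E1.
Qed.

Lemma thead_mk x w : size w = m -> thead (mk (x :: w)) = x.
Proof. by move=> sw; have := val_eta (mk (x :: w)); rewrite mkK /= ?sw // => [[]]. Qed.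
Lemma behead_mk x w : size w = m -> behead (mk (x :: w)) = w.
Proof. by move=> sw; rewrite /= mkK /= ?sw. Qed.

Lemma memb_act x w : size w = m ->
  memb (mk (sT x :: w)) = memb (mk (sT x :: actS (sT x) (tT x) w)).
Proof.
move=> sw; have saw : size (actS (sT x) (tT x) w) = m by rewrite size_actS.
have p1 := pair_sum (mk (sT x :: w)).
have p2 := pair_sum (mk (tT x :: actS (sT x) (tT x) w)).
have p3 := pair_sum (mk (sT x :: actS (sT x) (tT x) w)).
have e1 : partner (mk (tT x :: actS (sT x) (tT x) w)) = mk (sT x :: w).
  apply: val_inj; rewrite val_partner /= thead_mk // behead_mk // sT_t tT_t tT_neq.
  by rewrite actinvS ?st_neq // mkK //= sw.
have e2 : partner (mk (sT x :: actS (sT x) (tT x) w)) = mk (tT x :: actS (sT x) (tT x) w).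
  apply: val_inj; rewrite val_partner /= thead_mk // behead_mk // sT_s tT_s eqxx.
  by rewrite mkK //= saw.
rewrite e1 in p2; rewrite e2 in p3.
move: p2 p3; case: (memb (mk (sT x :: w))); case: (memb (mk (tT x :: _)));
  by case: (memb (mk (sT x :: actS _ _ w))).
Qed.



Lemma iter_size x j w : size (iter j (actS (sT x) (tT x)) w) = size w.
Proof. by elim: j => //= j IH; rewrite size_actS. Qed.

Lemma memb_rho x w : size w = m ->
  memb (mk (sT x :: w)) = memb (mk (sT x :: rho (sT x) (tT x) w)).
Proof.
move=> sw; have [j ->] := rho_iter (st_neq x) w.
elim: j => // j IH; rewrite IH /= memb_act ?iter_size //.
Qed.

Lemma inS_Tof u : inS (Tof P) u = memb u.
Proof.
rewrite /inS; set x := thead u; set w := behead u.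
have sw : size w = m by rewrite size_beh.
have srw : size (rho (sT x) (tT x) w) = m by rewrite size_rho.
have -> : Ex (Tof P) x w = memb (mk (sT x :: rho (sT x) (tT x) w)).
  rewrite /Ex; apply/existsP/idP.
    case=> q /andP [qT /eqP qv].
    have -> : mk (sT x :: rho (sT x) (tT x) w) = q by apply: val_inj; rewrite mkK //= srw.
    by move: qT; rewrite in_set => /andP [].
  move=> H; exists (mk (sT x :: rho (sT x) (tT x) w)).
  rewrite mkK /=; last by rewrite srw.
  rewrite eqxx andbT /Tof in_set; apply/andP; split; last exact: H.
  by rewrite in_set thead_mk // behead_mk // sT_s tT_s eqxx rho_idem eqxx.
rewrite -(memb_rho x sw).
case: (boolP (x == sT x)) => xs.
  have -> : u = mk (sT x :: w) by apply: val_inj; rewrite mkK /= ?sw // -(eqP xs) val_eta.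
  by case: (memb _).
have xt : x = tT x by case/orP: (x_st x) => [h|/eqP //]; rewrite h in xs.
have -> : u = partner (mk (sT x :: w)).
  apply: val_inj; rewrite val_partner /= thead_mk // behead_mk // sT_s tT_s eqxx.
  by rewrite -xt [LHS]val_eta.
have := pair_sum (mk (sT x :: w)).
by case: (memb (mk (sT x :: w))); case: (memb (partner _)).
Qed.

Lemma Phi_Tof : Phi (Tof P) = P.
Proof.
apply/setP => [[u j]]; rewrite in_set /= inS_Tof /memb.
case: (boolP ((u, j) \in P)) => H.
  by rewrite -(spm_lab HP H) eqxx H.
by case: (eqVneq j (lab (thead u))) => [<-|] //; rewrite (negbTE H).
Qed.

End PMfix.

Lemma count_pm : #|[set M : {set sedge E n} | schreier_pm M]| = 2 ^ #|R|.
Proof.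
rewrite -card_powerset.
have -> : [set M : {set sedge E n} | schreier_pm M] = Phi @: powerset R.
  apply/setP => M; rewrite in_set; apply/idP/imsetP.
    move=> HP; exists (Tof M); last by rewrite Phi_Tof.
    by rewrite powersetE; apply/subsetP => u; rewrite in_set => /andP [].
  by move=> [T _ ->]; apply: Phi_pm.
apply: card_in_imset => T1 T2; rewrite !powersetE => H1 H2 E1.
by rewrite -(Tof_Phi H1) -(Tof_Phi H2) E1.
Qed.


Lemma card_src : 2 * #|[set x | x == sT x]| = #|V|.
Proof.
set S := [set x | x == sT x].
rewrite -(cardsC S) mul2n -addnn; congr (_ + _).
have -> : ~: S = [set tT x | x in S].
  apply/setP => y; rewrite !in_set; apply/idP/imsetP.
    move=> ys; exists (sT y); first by rewrite in_set sT_s.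
    rewrite tT_s; case/orP: (x_st y) => [h|/eqP //]; by rewrite h in ys.
  by move=> [x xS ->]; rewrite sT_t tT_neq.
rewrite card_in_imset // => x x'; rewrite !in_set => /eqP xs /eqP x's E1.
by rewrite xs x's /sT -lab_t E1 lab_t.
Qed.

Lemma card_R : #|R| =
  \sum_x (x == sT x) * #|[set w : m.-tuple V | rho (sT x) (tT x) (val w) == val w]|.
Proof.
pose p (l : seq V) := (head r l == sT (head r l)) &&
   (rho (sT (head r l)) (tT (head r l)) (behead l) == behead l).
have -> : #|R| = #|[set u : tup | p (val u)]|.
  by apply: eq_card => u; rewrite !in_set /p [in RHS]val_eta.
rewrite card_split; apply: eq_bigr => x _; rewrite /p /=.
case: (x == sT x); first by rewrite mul1n.
by rewrite mul0n; apply/eqP; rewrite cards_eq0; apply/eqP/setP => w; rewrite !in_set.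
Qed.

End WithPM.

End Schreier.


Lemma Fcount (V : finType) (s t : V) m : s != t ->
  (#|V| - 1) * #|[set w : m.-tuple V | rho s t (val w) == val w]| =
  (#|V| - 2) * #|V| ^ m + 1.
Proof.
move=> st.
have k2 : 2 <= #|V|.
  by have := max_card [set s; t]; rewrite cards2 st.
elim: m => [|m IH].
  rewrite (_ : #|_| = 1); first by rewrite expn0 !muln1; lia.
  transitivity #|{: 0.-tuple V}|; last by rewrite card_tuple.
  apply: eq_card => w.
  by rewrite in_set tuple0.
rewrite (card_split m (fun l => rho s t l == l)) /=.
set F := #|[set w : m.-tuple V | rho s t (val w) == val w]|.
set P := #|V| ^ m.
rewrite (eq_bigr (fun x => (x == s : nat) * F + ((x != s) && (x != t) : nat) * P)); last first.
  move=> x _; case: (eqVneq x s) => [->|xs] /=.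
    rewrite mul1n mul0n addn0; apply: eq_card => w; by rewrite !in_set eqseq_cons eqxx.
  case: (eqVneq x t) => [->|xt] /=.
    rewrite !mul0n; apply/eqP; rewrite cards_eq0; apply/eqP/setP => w.
    by rewrite !inE eqseq_cons (negbTE st).
  rewrite mul0n mul1n /P -card_tuple; apply: eq_card => w; by rewrite !in_set eqxx.
rewrite big_split /= -!big_distrl /= (sum_pred1 predT s) /= mul1n.
rewrite -card_pred.
have -> : #|[set x | (x != s) && (x != t)]| = #|V| - 2.
  have H := cardsC [set s; t]; rewrite cards2 st in H.
  rewrite (_ : #|_| = #|~: [set s; t]|); first by lia.
  by apply: eq_card => x; rewrite !inE negb_or.
rewrite expnS -/P; move: IH; rewrite -/F -/P => IH.
move: k2 IH; set K := #|V| => k2 IH.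
have -> : K = (K - 2) + 2 by lia.
move: IH; have -> : K = (K - 2) + 2 by lia.
set c := K - 2.
rewrite !addnK (_ : c + 2 - 1 = c + 1); last by lia.
move=> IH; rewrite mulnDr IH; nia.
Qed.

Unset Implicit Arguments.
Set Strict Implicit.

Theorem theorem3p4 (V : finType) (E : seq (V * V)) (n : nat) :
  2 <= #|V| -> 1 <= n -> is_tree E ->
  (tree_has_pm E ->
     exists e : nat,
       (2 * (#|V| - 1)) * e = #|V| * (#|V| ^ n - 2 * #|V| ^ n.-1 + 1) /\
       #|[set M : {set sedge E n} | schreier_pm M]| = 2 ^ e) /\
  (~ tree_has_pm E ->
     forall M : {set sedge E n}, ~~ schreier_pm M).
Proof.
move=> k2 n1 [Hu Hloop Hanti Hconn Hsize].
case: n n1 => [//|m] _.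
have [r _] : exists r : V, true.
  have : 0 < #|V| by lia.
  by case/card_gt0P => r _; exists r.
have szE : 0 < size E by rewrite Hsize; lia.
pose i0 : 'I_(size E) := Ordinal szE.
split.
  move=> [M0 HM0].
  have HM0' : forall v, #|[set i in M0 | inc v i]| = 1 := HM0.
  exists #|R m i0 M0|; split; last exact: (count_pm m Hconn Hsize Hloop r i0 HM0').
  rewrite (card_R m r i0 M0).
  set C := (#|V| - 2) * #|V| ^ m + 1.
  rewrite -mulnA big_distrr /=.
  rewrite (eq_bigr (fun x => (x == sT i0 M0 x) * C)); last first.
    by move=> x _; rewrite mulnCA Fcount // st_neq.
  rewrite -big_distrl /= -card_pred mulnA (card_src Hloop i0 HM0').
  congr (_ * _); rewrite /C /= expnS mulnBl; by [].
move=> NPM M; apply/negP => HP; apply: NPM.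
exists [set j | mP M j == #|V| ^ m] => v.
exact: (spm_tree Hconn Hsize Hloop r i0 HP v).
Qed.
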